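(* Let $q=2^n$ with $n\ge 1$, and let $\mathbb{K}=\mathbb{F}_q(Y)$ where $Y$ is transcendental over $\mathbb{F}_q$. If $k>0$ is odd, then the polynomial $G(X)=\prod_{w\in\mathbb{F}_q^\times}\bigl(D_k(wX)-Y\bigr)\in\mathbb{K}[X]$ has no repeated roots in an algebraic closure $\overline{\mathbb{K}}$ of $\mathbb{K}$.
   Context: The $k$th Dickson polynomial $D_k(x)\in\mathbb{Z}[x]$ is defined by $D_0(x)=2$, $D_1(x)=x$, and $D_k(x)=xD_{k-1}(x)-D_{k-2}(x)$ for $k\ge 2$; equivalently it satisfies $D_k(u+1/u)=u^k+u^{-k}$. Here $D_k$ is regarded as a polynomial over $\mathbb{F}_q$ via reduction of its integer coefficients modulo $2$. *)

(* Defs.v *)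
From HB Require Import structures.
From mathcomp Require Import all_boot all_order all_algebra all_field.
Set Implicit Arguments. Unset Strict Implicit. Unset Printing Implicit Defensive.
Import GRing.Theory.
Local Open Scope ring_scope.

(* Dickson polynomials over Z: D_0 = 2, D_1 = X, D_k = X D_{k-1} - D_{k-2}.
   dickson_pair k = (D_k, D_{k+1}). *)
Fixpoint dickson_pair (k : nat) : {poly int} * {poly int} :=
  match k with
  | 0%N => (2%:P, 'X)
  | k'.+1 => let: (a, b) := dickson_pair k' in (b, 'X * b - a)
  end.

Definition dickson (k : nat) : {poly int} := (dickson_pair k).1.

Definition dicksonR (R : nzRingType) (k : nat) : {poly R} :=
  map_poly (fun z : int => z%:~R) (dickson k).

Definition ratfun (F : fieldType) := {fraction {poly F}}.

Definition ratY (F : fieldType) : ratfun F := tofrac 'X.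

Definition ratC (F : fieldType) (a : F) : ratfun F := tofrac (a%:P).

Definition dicksonG (F : finFieldType) (k : nat) : {poly ratfun F} :=
  \prod_(w : F | w != 0)
     ((dicksonR (ratfun F) k \Po (ratC w *: 'X)) - (ratY F)%:P).

(* Main.v *)
Require Import Defs.
From HB Require Import structures.
From mathcomp Require Import all_boot all_order all_algebra all_field.
Import GRing.Theory.
Local Open Scope ring_scope.

Lemma dickson_pair2 k : (dickson_pair k).2 = dickson k.+1.
Proof. by rewrite /dickson /=; case: (dickson_pair k). Qed.

Lemma dickson_rec k : dickson k.+2 = 'X * dickson k.+1 - dickson k.
Proof.
rewrite -!dickson_pair2 /dickson /=.
by case: (dickson_pair k) => a b /=.
Qed.

Lemma dicksonR_rec (R : nzRingType) k :
  dicksonR R k.+2 = 'X * dicksonR R k.+1 - dicksonR R k.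
Proof.
by rewrite /dicksonR dickson_rec rmorphB rmorphM /= map_polyX.
Qed.

Lemma dicksonR0 (R : nzRingType) : dicksonR R 0 = 2%:R%:P.
Proof. by rewrite /dicksonR /dickson /= map_polyC. Qed.

Lemma dicksonR1 (R : nzRingType) : dicksonR R 1 = 'X.
Proof. by rewrite /dicksonR /dickson /= map_polyX. Qed.

Lemma dicksonR_map (R S : nzRingType) (g : {rmorphism R -> S}) k :
  map_poly g (dicksonR R k) = dicksonR S k.
Proof.
rewrite /dicksonR -map_poly_comp; apply: eq_map_poly => z /=.
by rewrite rmorph_int.
Qed.

Section Char2.
Variable R : nzRingType.
Hypothesis h2 : (2%:R : R) = 0.

Lemma natmul2 (x : R) n : x *+ n = x *+ odd n.
Proof.
rewrite -{1}(odd_double_half n) mulrnDr -muln2 mulnC mulrnA.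
by rewrite -[x *+ 2]mulr_natr h2 mulr0 mul0rn addr0.
Qed.

Lemma dicksonR_coef k :
  [/\ forall i, odd i != odd k -> (dicksonR R k)`_i = 0,
      (dicksonR R k)`_0 = 0 & (dicksonR R k)`_1 = (odd k)%:R].
Proof.
suff: forall k, (
  [/\ forall i, odd i != odd k -> (dicksonR R k)`_i = 0,
      (dicksonR R k)`_0 = 0 & (dicksonR R k)`_1 = (odd k)%:R] /\
  [/\ forall i, odd i != odd k.+1 -> (dicksonR R k.+1)`_i = 0,
      (dicksonR R k.+1)`_0 = 0 & (dicksonR R k.+1)`_1 = (odd k.+1)%:R]) by move=> H; case: (H k).
clear k; elim=> [|k [[Ha0 Ha1 Ha2] [Hb0 Hb1 Hb2]]].
  rewrite dicksonR0 dicksonR1; split; split.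
  - by move=> i _; rewrite coefC; case: ifP => // _; rewrite h2.
  - by rewrite coefC h2.
  - by rewrite coefC.
  - by move=> [|[|i]] //; rewrite coefX.
  - by rewrite coefX.
  - by rewrite coefX.
split; first by split.
rewrite dicksonR_rec; split.
- move=> [|i] /= hi; rewrite coefB coefXM /=.
    by rewrite Ha1 subr0.
  by rewrite Hb0 ?Ha0 ?subr0 //=; move: hi; case: (odd i); case: (odd k).
- by rewrite coefB coefXM /= Ha1 subr0.
- rewrite coefB coefXM /= Hb1 Ha2 sub0r /=.
  case: (odd k) => /=; last by rewrite oppr0.
  by apply/eqP; rewrite eq_sym -subr_eq0 opprK -h2.
Qed.
End Char2.

Lemma dicksonR_XD (R : nzRingType) (h2 : (2%:R : R) = 0) k : odd k ->
  'X * (dicksonR R k)^`() = dicksonR R k.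
Proof.
move=> ok; have [Hp H0 _] := @dicksonR_coef _ h2 k.
apply/polyP => i; rewrite coefXM; case: i => [|i] /=; first by rewrite H0.
rewrite coef_deriv natmul2 //.
case oi: (odd i.+1); first by [].
by rewrite mulr0n Hp // oi ok.
Qed.

Section Fld.
Variable L : fieldType.
Hypothesis h2 : (2%:R : L) = 0.
Variable k : nat.
Hypothesis ok : odd k.
Local Notation D := (dicksonR L k).

Lemma D_eval z : D.[z] = z * (D^`()).[z].
Proof. by rewrite -{1}(@dicksonR_XD _ h2 k ok) hornerM hornerX. Qed.

Lemma simple_root (c y x : L) : c != 0 -> y != 0 ->
  root ((D \Po (c *: 'X)) - y%:P) x ->
  (((D \Po (c *: 'X)) - y%:P)^`()).[x] != 0.
Proof.
move=> c0 y0 /rootP; rewrite hornerD hornerN hornerC horner_comp hornerZ hornerX.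
move=> /eqP; rewrite subr_eq0 => /eqP Dy.
rewrite derivB derivC subr0 deriv_comp derivZ derivX hornerM horner_comp.
rewrite !hornerE /= mulr1 mulf_neq0 //.
apply: contraNneq y0 => d0.
by rewrite -Dy D_eval d0 mulr0.
Qed.

Lemma dist_poly (w v : L) : w != v ->
  (D \Po (w *: 'X)) - (D \Po (v *: 'X)) != 0.
Proof.
move=> wv; apply: contraNneq wv => H; move: (congr1 (fun p => (deriv p).[0]) H) => /=.
rewrite derivB !deriv_comp !derivZ !derivX hornerD hornerN !hornerM !horner_comp.
rewrite !hornerZ !hornerX !hornerC !mulr0 !mulr1 deriv0 horner0 horner_coef0 coef_deriv.
have [_ _ ->] := @dicksonR_coef _ h2 k; rewrite ok /= mul1r.
by rewrite mul1r => /eqP; rewrite subr_eq0.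
Qed.
End Fld.

Lemma r_X (F : fieldType) (r : {poly F}) : (map_poly polyC r).['X] = r.
Proof. by rewrite -[RHS]comp_polyXr. Qed.

Lemma transc (F : fieldType) (h2F : (2%:R : F) = 0) k (ok : odd k)
  (L : fieldType) (f : {rmorphism ratfun F -> L}) (x : L) (w v : F) :
  w != v ->
  let g : {rmorphism F -> L} := f \o (@tofrac _) \o (@polyC F) in
  let y := f (ratY F) in
  root ((dicksonR L k \Po (g w *: 'X)) - y%:P) x ->
  root ((dicksonR L k \Po (g v *: 'X)) - y%:P) x -> False.
Proof.
move=> wv g y /rootP rw /rootP rv.
have alg_x : algebraicOver g x.
  exists ((dicksonR F k \Po (w *: 'X)) - (dicksonR F k \Po (v *: 'X))).
    exact: dist_poly.
  apply/rootP.
  rewrite rmorphB /= !map_comp_poly !map_polyZ !map_polyX !dicksonR_map.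
  move: rw rv; rewrite !hornerD !hornerN !hornerC => /eqP; rewrite subr_eq0 => /eqP ->.
  by move/eqP; rewrite subr_eq0 => /eqP ->; rewrite subrr.
have alg_y : algebraicOver g y.
  apply: (algebraic_root_polyXY _ alg_x).
  have E1 : map_poly (map_poly g) (map_poly polyC (dicksonR F k \Po (w *: 'X)))
      = map_poly polyC ((dicksonR L k \Po (g w *: 'X))).
    rewrite -!map_poly_comp.
    rewrite (eq_map_poly (g := polyC \o g)); last by move=> z /=; rewrite map_polyC.
    by rewrite map_poly_comp /= map_comp_poly map_polyZ map_polyX dicksonR_map.
  have E : (map_poly (map_poly g) (('X : {poly F})%:P - map_poly polyC (dicksonR F k \Po (w *: 'X)))).[x%:P]
     = 'X - ((dicksonR L k \Po (g w *: 'X)).[x])%:P.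
    rewrite rmorphB /= E1 map_polyC /= map_polyX hornerD hornerN hornerC.
    by rewrite (horner_map polyC).
  exists (('X : {poly F})%:P - map_poly polyC (dicksonR F k \Po (w *: 'X))); rewrite E.
    by rewrite polyXsubC_eq0.
  rewrite root_XsubC.
  by move: rw; rewrite hornerD hornerN hornerC => /eqP; rewrite subr_eq0 eq_sym.
case: alg_y => r r0 /rootP ry.
have : f (tofrac r) = 0.
  rewrite -ry /y /ratY.
  have -> : map_poly g r = map_poly f (map_poly (@tofrac _) (map_poly polyC r)).
    by rewrite -!map_poly_comp.
  by rewrite horner_map /= horner_map r_X.
by move/eqP; rewrite fmorph_eq0 tofrac_eq0 (negPf r0).
Qed.

Theorem lemma2 (n : nat) (F : finFieldType) (k : nat) :
  (1 <= n)%N -> #|F| = (2 ^ n)%N -> odd k ->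
  forall (L : closedFieldType) (f : {rmorphism ratfun F -> L}) (x : L),
    ~~ ((('X - x%:P) ^+ 2) %| map_poly f (dicksonG F k)).
Proof.
move=> n1 cardF ok L f x.
have h2F : (2%:R : F) = 0 by apply: pcharf0; apply: (card_finPcharP cardF).
pose g : {rmorphism F -> L} := f \o (@tofrac _) \o (@polyC F).
have h2L : (2%:R : L) = 0 by rewrite -(rmorph_nat g) h2F rmorph0.
pose y := f (ratY F).
have y0 : y != 0 by rewrite fmorph_eq0 /ratY tofrac_eq0 polyX_eq0.
pose G w := (dicksonR L k \Po (g w *: 'X)) - y%:P.
have -> : map_poly f (dicksonG F k) = \prod_(w : F | w != 0) G w.
  rewrite /dicksonG rmorph_prod; apply: eq_bigr => w _.
  by rewrite rmorphB /= map_comp_poly map_polyZ map_polyX map_polyC dicksonR_map.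
have gw0 : forall w, w != 0 -> g w != 0 by move=> w; rewrite fmorph_eq0.
case: (boolP [exists w, (w != 0) && root (G w) x]) => [/existsP[w0 /andP[w00 r0]] | /existsPn none].
- rewrite (bigD1 w0) //=.
  have [h Eh] := factor_theorem _ _ r0.
  have hx : h.[x] != 0.
    have := @simple_root L h2L k ok _ _ _ (gw0 _ w00) y0 r0.
    rewrite -/(G w0) Eh derivM derivXsubC mulr1 hornerD hornerM hornerXsubC subrr mulr0 add0r.
    done.
  have rx : (\prod_(w | (w != 0) && (w != w0)) G w).[x] != 0.
    rewrite horner_prod; apply/prodf_neq0 => w /andP[w0' ww0].
    apply/negP => /eqP rw.
    apply: (@transc _ h2F k ok L f x w0 w); first by rewrite eq_sym.
      exact: r0.
    exact/rootP.
  rewrite Eh mulrAC mulrC expr2 dvdp_mul2l ?polyXsubC_eq0 // dvdp_XsubCl.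
  by rewrite rootE hornerM mulf_neq0.
- apply/negP => Hd.
  have : root (\prod_(w | w != 0) G w) x.
    rewrite -dvdp_XsubCl; apply: dvdp_trans Hd.
    by rewrite expr2 dvdp_mulr.
  rewrite /root horner_prod; apply/negP; apply/prodf_neq0 => w w0.
  by have := none w; rewrite w0.
Qed.
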